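(* In a PL+C model, if $\sum_{i\in\mathcal U}p_i\ge\alpha k$ for some $\alpha>1$, then $$\sum_{C\subseteq\mathcal U,\ |C|=k}\Pr_C(C)\le\frac{(\alpha e^{1-\alpha})^k}{1-(\alpha e^{1-\alpha})^k}.$$
   Context: Universe $\mathcal U=\{1,\dots,n\}$, integer $k\le n$, consideration probabilities $p_i\in(0,1]$. $\Pr_C(C)$ is the probability of consideration set $C$ when each item is included independently with probability $p_i$, conditioned on $|C|\ge k$: $\Pr_C(C)=\frac{1}{z_{k,p}}\prod_{h\in C}p_h\prod_{h\notin C}(1-p_h)$ for $|C|\ge k$, where $z_{k,p}=\sum_{|C|\ge k}\prod_{h\in C}p_h\prod_{h\notin C}(1-p_h)$, and $\Pr_C(C)=0$ if $|C|<k$. *)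

(* Defs.v *)
From mathcomp Require Import all_boot all_order all_algebra.
From mathcomp Require Import all_classical all_reals all_analysis.
Set Implicit Arguments. Unset Strict Implicit. Unset Printing Implicit Defensive.
Import Order.TTheory GRing.Theory Num.Theory.
Local Open Scope ring_scope.

(* Universe U = {1..n} is represented by 'I_n. *)
Definition set_weight (R : realType) (n : nat) (p : 'I_n -> R) (C : {set 'I_n}) : R :=
  (\prod_(h in C) p h) * (\prod_(h in ~: C) (1 - p h)).

Definition z_const (R : realType) (n k : nat) (p : 'I_n -> R) : R :=
  \sum_(C : {set 'I_n} | (k <= #|C|)%N) set_weight p C.

Definition PrC (R : realType) (n k : nat) (p : 'I_n -> R) (C : {set 'I_n}) : R :=
  if (k <= #|C|)%N then set_weight p C / z_const k p else 0.

(* Main.v *)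
Require Import Defs.
From mathcomp Require Import all_boot all_order all_algebra.
From mathcomp Require Import all_classical all_reals all_analysis.
From mathcomp Require Import ring lra.
Import Order.TTheory GRing.Theory Num.Theory.
Local Open Scope ring_scope.

Lemma weight_gen (R : realType) (n : nat) (p : 'I_n -> R) (t : R) :
  \sum_(C : {set 'I_n}) set_weight p C * t ^+ #|C|
  = \prod_(i < n) (p i * t + (1 - p i)).
Proof.
rewrite bigA_distr; apply: eq_bigr => C _.
symmetry; rewrite /set_weight [LHS](bigID (fun i => i \in C)) /=.
rewrite [RHS]mulrAC; congr (_ * _).
  rewrite -prodr_const -big_split /=; by apply: eq_bigr => i ->.
apply: eq_big => [i|i]; first by rewrite finset.in_setC. by move/negbTE => ->.
Qed.

Lemma weight_ge0 (R : realType) (n : nat) (p : 'I_n -> R) C :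
  (forall i, 0 < p i <= 1) -> 0 <= set_weight p C.
Proof.
move=> hp; rewrite /set_weight; apply: mulr_ge0; apply: prodr_ge0 => i _.
  by case/andP: (hp i) => /ltW.
by case/andP: (hp i) => _; rewrite subr_ge0.
Qed.

Theorem lemma4 (R : realType) (n k : nat) (p : 'I_n -> R) (alpha : R) :
  (1 <= k)%N -> (k <= n)%N ->
  (forall i, 0 < p i <= 1) ->
  1 < alpha ->
  alpha * k%:R <= \sum_(i < n) p i ->
  \sum_(C : {set 'I_n} | #|C| == k) PrC k p C
    <= (alpha * expR (1 - alpha)) ^+ k / (1 - (alpha * expR (1 - alpha)) ^+ k).
Proof.
move=> k1 kn hp a1 hS.
have a0 : 0 < alpha by apply: lt_trans a1.
set beta := alpha * expR (1 - alpha).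
have b0 : 0 <= beta by rewrite mulr_ge0 // ?ltW // expR_gt0.
have b1 : beta < 1.
  rewrite /beta -(ltr_pM2r (expR_gt0 (alpha - 1))) -mulrA -expRD.
  have -> : 1 - alpha + (alpha - 1) = 0 by ring.
  rewrite expR0 mulr1 mul1r.
  have := expR_gt1Dx (x := alpha - 1); have -> : 1 + (alpha - 1) = alpha by ring. apply.
  by rewrite subr_eq0 gt_eqF.
have bk1 : beta ^+ k < 1 by rewrite exprn_ilt1 // -lt0n.
set t := alpha^-1.
have t0 : 0 < t by rewrite invr_gt0.
have t1 : t <= 1 by rewrite invr_le1 ?unitf_gt0 // ltW.
have wge0 : forall C, 0 <= set_weight p C by move=> C; apply: weight_ge0.
(* Chernoff *)
have H1 : (\sum_(C : {set 'I_n} | (#|C| <= k)%N) set_weight p C) * t ^+ k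
          <= \prod_(i < n) (p i * t + (1 - p i)).
  rewrite -weight_gen mulr_suml [X in _ <= X](bigID (fun C : {set 'I_n} => (#|C| <= k)%N)) /=.
  rewrite -[X in X <= _]addr0; apply: lerD.
    apply: ler_sum => C hC; apply: ler_wpM2l => //.
    rewrite -(subnKC hC) exprD; apply: ler_piMr.
      exact: exprn_ge0 (ltW t0).
    exact: exprn_ile1 (ltW t0) t1.
  by apply: sumr_ge0 => C _; rewrite mulr_ge0 // exprn_ge0 // ltW.
have H2 : \prod_(i < n) (p i * t + (1 - p i)) <= beta ^+ k * t ^+ k.
  apply: (@le_trans _ _ (\prod_(i < n) expR (p i * (t - 1)))).
    apply: ler_prod => i _; case/andP: (hp i) => pi0 pi1; apply/andP; split.
      by rewrite addr_ge0 ?mulr_ge0 ?subr_ge0 // ltW.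
    apply: le_trans (expR_ge1Dx _); rewrite mulrBr mulr1; lra.
  rewrite -expR_sum -mulr_suml -exprMn /beta mulrAC mulfV ?gt_eqF // mul1r.
  rewrite -expRM_natl ler_expR mulrC.
  apply: (le_trans (ler_wnM2l _ hS)); first by rewrite subr_le0.
  rewrite le_eqVlt; apply/orP; left; apply/eqP; rewrite /t; field.
  by rewrite gt_eqF.
have tk0 : 0 < t ^+ k by rewrite exprn_gt0.
have H3 : \sum_(C : {set 'I_n} | (#|C| <= k)%N) set_weight p C <= beta ^+ k.
  by rewrite -(ler_pM2r tk0); apply: le_trans H1 H2.
have Htot : \sum_(C : {set 'I_n}) set_weight p C = 1.
  transitivity (\sum_(C : {set 'I_n}) set_weight p C * 1 ^+ #|C|).
    by apply: eq_bigr => C _; rewrite expr1n mulr1.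
  rewrite weight_gen; apply: big1 => i _; by rewrite mulr1 addrC subrK.
set A := \sum_(C : {set 'I_n} | #|C| == k) set_weight p C.
set B := \sum_(C : {set 'I_n} | (#|C| < k)%N) set_weight p C.
set Z := \sum_(C : {set 'I_n} | (k <= #|C|)%N) set_weight p C.
have HZ : Z + B = 1.
  rewrite -Htot (bigID (fun C : {set 'I_n} => (k <= #|C|)%N) predT) /=.
  congr (_ + _); apply: eq_bigl => C; by rewrite ltnNge.
have HAB : A + B <= beta ^+ k.
  apply: le_trans H3; rewrite le_eqVlt; apply/orP; left; apply/eqP.
  rewrite [RHS](bigID (fun C : {set 'I_n} => #|C| == k)) /=.
  congr (_ + _); apply: eq_bigl => C.
    by case: (boolP (#|C| == k)) => [/eqP ->|]; rewrite ?leqnn ?andbF ?eqxx.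
  by rewrite ltn_neqAle andbC.
have A0 : 0 <= A by apply: sumr_ge0.
have B0 : 0 <= B by apply: sumr_ge0.
have Z0 : 0 < Z by lra.
have -> : \sum_(C : {set 'I_n} | #|C| == k) PrC k p C = A / Z.
  rewrite /A mulr_suml; apply: eq_bigr => C /eqP hC.
  by rewrite /PrC hC leqnn.
rewrite ler_pdivrMr // mulrAC ler_pdivlMr; last by rewrite subr_gt0.
have bk0 : 0 <= beta ^+ k by rewrite exprn_ge0.
have -> : Z = 1 - B by lra.
nra.
Qed.
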